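(* Let $0<q<1$, $0\le p<1$, and \[ \beta_n=\frac{q(1-q^n)(1-pq^n)}{(1+q-(1+p)q^n)(1+q-(1+p)q^{n+1})},\quad n\ge1. \] Then the continued fraction \[ 1-\cfrac{\beta_1}{1-\cfrac{\beta_2}{1-\cfrac{\beta_3}{1-\dotsb}}} \] converges and has the value \[ \frac{q}{1-pq}\frac{\Delta_0}{\Delta_1}=\frac{q(1-p)(pq^2;q)_\infty}{(pq;q)_\infty-(q;q)_\infty}. \] More generally, for every $k\ge0$, the continued fraction \[ 1-\cfrac{\beta_{k+1}}{1-\cfrac{\beta_{k+2}}{1-\cfrac{\beta_{k+3}}{1-\dotsb}}} \] has the value $\dfrac{q}{1+q-(1+p)q^{k+1}}\dfrac{\Delta_{k}}{\Delta_{k+1}}$.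
   Context: $(a;q)_n=\prod_{k=1}^n(1-aq^{k-1})$ for $n\in\{0,1,\dots\}\cup\{\infty\}$, and $\Delta_n=(pq^n;q)_\infty-(q^n;q)_\infty$ for $n\ge0$. The value of the continued fraction is the limit of its finite approximants. *)

(* Defs.v *)
From Stdlib Require Import Reals.
From Coquelicot Require Import Coquelicot.
Open Scope R_scope.

Fixpoint qpoch (a q : R) (n : nat) : R :=
  match n with
  | O => 1
  | S m => qpoch a q m * (1 - a * q ^ m)
  end.

Definition qpoch_inf (a q : R) : R := real (Lim_seq (fun n => qpoch a q n)).

Definition qDelta (p q : R) (n : nat) : R :=
  qpoch_inf (p * q ^ n) q - qpoch_inf (q ^ n) q.

Definition qbeta (p q : R) (n : nat) : R :=
  q * (1 - q ^ n) * (1 - p * q ^ n) /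
  ((1 + q - (1 + p) * q ^ n) * (1 + q - (1 + p) * q ^ (S n))).

(* N-th finite approximant of 1 - b 0/(1 - b 1/(1 - b 2/(1 - ...))):
   cf_approx b 0 = 1,  cf_approx b (N+1) = 1 - b 0 / cf_approx (b shifted) N,
   i.e. 1 - b0/(1 - b1/( ... /(1 - b_{N-1}))). *)
Fixpoint cf_approx (b : nat -> R) (N : nat) : R :=
  match N with
  | O => 1
  | S M => 1 - b O / cf_approx (fun n => b (S n)) M
  end.

(* Main.v *)
Require Import Defs.
From Stdlib Require Import Reals Lra Lia.
From Coquelicot Require Import Coquelicot.
Open Scope R_scope.

Lemma pow_le1 (q : R) (n : nat) : 0 <= q <= 1 -> q ^ n <= 1.
Proof.
  intros Hq. induction n; simpl; [lra|].
  assert (0 <= q ^ n) by (apply pow_le; lra). nra.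
Qed.

Lemma qpoch_front (a q : R) (n : nat) :
  qpoch a q (S n) = (1 - a) * qpoch (a * q) q n.
Proof.
  induction n as [|n IH]; simpl; [ring|].
  simpl in IH. rewrite IH. ring.
Qed.

Lemma qpoch_nonneg (a q : R) (n : nat) : 0 <= a <= 1 -> 0 <= q <= 1 ->
  0 <= qpoch a q n.
Proof.
  intros Ha Hq. induction n as [|n IH]; simpl; [lra|].
  apply Rmult_le_pos; auto.
  assert (a * q ^ n <= 1).
  { assert (0 <= q ^ n <= 1) by (split; [apply pow_le; lra| apply pow_le1; lra]). nra. }
  lra.
Qed.

Lemma qpoch_decr (a q : R) (n : nat) : 0 <= a <= 1 -> 0 <= q <= 1 ->
  qpoch a q (S n) <= qpoch a q n.
Proof.
  intros Ha Hq. simpl.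
  assert (0 <= q ^ n) by (apply pow_le; lra).
  assert (0 <= qpoch a q n) by (apply qpoch_nonneg; auto).
  assert (0 <= a * q ^ n) by nra. nra.
Qed.

Lemma qpoch_lim (a q : R) : 0 <= a <= 1 -> 0 <= q <= 1 ->
  is_lim_seq (fun n => qpoch a q n) (qpoch_inf a q).
Proof.
  intros Ha Hq.
  assert (H : ex_finite_lim_seq (fun n => qpoch a q n)).
  { apply ex_finite_lim_seq_decr with 0.
    - intro n; apply qpoch_decr; auto.
    - intro n; apply qpoch_nonneg; auto. }
  pose proof (Lim_seq_correct' _ H) as H1.
  destruct H as [l Hl]. unfold qpoch_inf.
  rewrite (is_lim_seq_unique _ _ Hl) in H1 |- *. simpl. exact Hl.
Qed.

Lemma qpoch_weier (a q : R) (n0 m : nat) : 0 <= a <= 1 -> 0 < q < 1 ->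
  qpoch a q (n0 + m) >= qpoch a q n0 * (1 - q ^ n0 * (1 - q ^ m) / (1 - q)).
Proof.
  intros Ha Hq. induction m as [|m IH].
  - rewrite Nat.add_0_r. simpl.
    replace (q ^ n0 * (1 - 1) / (1 - q)) with 0 by (field; lra). lra.
  - rewrite Nat.add_succ_r. simpl qpoch.
    assert (0 <= qpoch a q n0) by (apply qpoch_nonneg; lra).
    assert (0 < q ^ (n0 + m)) by (apply pow_lt; lra).
    assert (q ^ (n0+m) <= 1) by (apply pow_le1; lra).
    assert (0 < q ^ m) by (apply pow_lt; lra).
    assert (E : q ^ (n0 + m) = q ^ n0 * q ^ m) by apply pow_add.
    set (S0 := q ^ n0 * (1 - q ^ m) / (1 - q)) in *.
    assert (E2 : q ^ n0 * (1 - q ^ S m) / (1 - q) = S0 + q ^ (n0 + m)).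
    { unfold S0; rewrite E; simpl; field; lra. }
    rewrite E2.
    assert (S0 >= 0).
    { unfold S0. apply Rle_ge. unfold Rdiv. apply Rmult_le_pos.
      - apply Rmult_le_pos; [apply pow_le; lra|].
        assert (q ^ m <= 1) by (apply pow_le1; lra). lra.
      - left; apply Rinv_0_lt_compat; lra. }
    assert (0 <= 1 - a * q ^ (n0 + m)) by nra.
    assert (qpoch a q (n0 + m) * (1 - a * q ^ (n0 + m)) >=
            qpoch a q n0 * (1 - S0) * (1 - a * q ^ (n0 + m))) by nra.
    assert (qpoch a q n0 * (1 - S0) * (1 - a * q ^ (n0 + m)) >=
            qpoch a q n0 * (1 - (S0 + q ^ (n0 + m)))) .
    { assert (a * q ^ (n0 + m) <= q ^ (n0+m)).
      { rewrite <- (Rmult_1_l (q ^ (n0 + m))) at 2. apply Rmult_le_compat_r; lra. }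
      assert (S0 * (a * q ^ (n0 + m)) >= 0).
      { apply Rle_ge, Rmult_le_pos; [lra|]. apply Rmult_le_pos; lra. }
      assert (0 <= qpoch a q n0 * (q ^ (n0 + m) - a * q ^ (n0 + m) + S0 * (a * q ^ (n0 + m))))
        by (apply Rmult_le_pos; lra).
      nra. }
    lra.
Qed.

Lemma qpoch_pos (a q : R) (n : nat) : 0 <= a < 1 -> 0 < q < 1 -> 0 < qpoch a q n.
Proof.
  intros Ha Hq. induction n; simpl; [lra|].
  assert (q ^ n <= 1) by (apply pow_le1; lra).
  assert (0 <= q ^ n) by (apply pow_le; lra).
  apply Rmult_lt_0_compat; auto. nra.
Qed.

Lemma qpoch_inf_pos (a q : R) : 0 <= a < 1 -> 0 < q < 1 -> 0 < qpoch_inf a q.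
Proof.
  intros Ha Hq.
  destruct (pow_lt_1_zero q ltac:(rewrite Rabs_pos_eq; lra) ((1 - q)/2)
     ltac:(apply Rdiv_lt_0_compat; lra)) as [n0 Hn0].
  specialize (Hn0 n0 (le_n _)). rewrite Rabs_pos_eq in Hn0 by (apply pow_le; lra).
  pose proof (qpoch_lim a q ltac:(lra) ltac:(lra)) as HL.
  apply (is_lim_seq_incr_n _ n0) in HL.
  pose proof (qpoch_pos a q n0 Ha Hq) as HQ.
  assert (Hb : forall m, qpoch a q n0 / 2 <= qpoch a q (m + n0)).
  { intro m. rewrite Nat.add_comm.
    pose proof (qpoch_weier a q n0 m ltac:(lra) Hq) as W.
    assert (0 < q ^ m) by (apply pow_lt; lra).
    assert (0 <= q ^ n0) by (apply pow_le; lra).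
    assert (q ^ n0 * (1 - q ^ m) / (1 - q) <= 1/2).
    { apply Rmult_le_reg_r with (1 - q); [lra|].
      unfold Rdiv. rewrite Rmult_assoc, Rinv_l by lra. nra. }
    nra. }
  pose proof (is_lim_seq_le _ _ _ _ Hb (is_lim_seq_const _) HL) as H.
  simpl in H. lra.
Qed.

Definition Df (p q : R) (j L : nat) := qpoch (p * q ^ j) q L - qpoch (q ^ j) q L.
Definition dd (p q : R) (n : nat) := 1 + q - (1 + p) * q ^ n.

Lemma qpoch_S (a q : R) (n : nat) : qpoch a q (S n) = qpoch a q n * (1 - a * q ^ n).
Proof. reflexivity. Qed.

Lemma cf_approx_S (b : nat -> R) (N : nat) :
  cf_approx b (S N) = 1 - b O / cf_approx (fun n => b (S n)) N.
Proof. reflexivity. Qed.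

Lemma cf_approx_ext (b c : nat -> R) (N : nat) :
  (forall n, b n = c n) -> cf_approx b N = cf_approx c N.
Proof.
  revert b c; induction N as [|N IH]; intros b c H; simpl; [reflexivity|].
  rewrite H, (IH (fun n => b (S n)) (fun n => c (S n))); auto.
Qed.

Lemma qj_bounds (q : R) (j : nat) : 0 < q < 1 -> 0 < q ^ j <= 1.
Proof. intros; split; [apply pow_lt; lra | apply pow_le1; lra]. Qed.

Lemma D_pos_aux (p q : R) (j L : nat) : 0 < q < 1 -> 0 <= p < 1 ->
  qpoch (q ^ j) q (S L) < qpoch (p * q ^ j) q (S L).
Proof.
  intros Hq Hp. pose proof (qj_bounds q j Hq).
  induction L as [|L IH].
  - simpl. nra.
  - rewrite (qpoch_S (q ^ j)), (qpoch_S (p * q ^ j)). 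
    assert (0 <= qpoch (q ^ j) q (S L)) by (apply qpoch_nonneg; lra).
    pose proof (qj_bounds q (S L) Hq).
    assert (0 < q ^ j * q ^ S L <= 1) by (split; nra).
    assert (0 <= p * q ^ j * q ^ S L < q ^ j * q ^ S L) by (split; nra).
    assert (0 <= 1 - q ^ j * q ^ S L) by lra.
    assert (qpoch (q ^ j) q (S L) * (1 - q ^ j * q ^ S L) <=
            qpoch (q ^ j) q (S L) * (1 - p * q ^ j * q ^ S L)) by
      (apply Rmult_le_compat_l; lra).
    assert (qpoch (q ^ j) q (S L) * (1 - p * q ^ j * q ^ S L) <
            qpoch (p * q ^ j) q (S L) * (1 - p * q ^ j * q ^ S L)) by
      (apply Rmult_lt_compat_r; lra).
    lra.
Qed.

Lemma D_pos (p q : R) (j L : nat) : 0 < q < 1 -> 0 <= p < 1 -> 0 < Df p q j (S L).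
Proof. intros; unfold Df; pose proof (D_pos_aux p q j L); lra. Qed.

Lemma D_lower (p q : R) (j L : nat) : 0 < q < 1 -> 0 <= p < 1 ->
  (1 - p * q ^ j) * qpoch (q ^ j) q (S L) <= (1 - q ^ j) * qpoch (p * q ^ j) q (S L).
Proof.
  intros Hq Hp. pose proof (qj_bounds q j Hq).
  induction L as [|L IH].
  - simpl. nra.
  - rewrite (qpoch_S (q ^ j)), (qpoch_S (p * q ^ j)).
    assert (0 <= qpoch (q ^ j) q (S L)) by (apply qpoch_nonneg; lra).
    assert (0 <= qpoch (p * q ^ j) q (S L)) by (apply qpoch_nonneg; nra).
    pose proof (qj_bounds q (S L) Hq).
    assert (0 < q ^ j * q ^ S L <= 1) by (split; nra).
    assert (0 <= p * q ^ j * q ^ S L < q ^ j * q ^ S L) by (split; nra).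
    assert (0 <= 1 - q ^ j * q ^ S L) by lra.
    assert (0 <= 1 - p * q ^ j) by nra.
    assert ((1 - p * q ^ j) * (qpoch (q ^ j) q (S L) * (1 - q ^ j * q ^ S L)) <=
            (1 - p * q ^ j) * (qpoch (q ^ j) q (S L) * (1 - p * q ^ j * q ^ S L))).
    { apply Rmult_le_compat_l; [lra|]. apply Rmult_le_compat_l; lra. }
    assert ((1 - p * q ^ j) * qpoch (q ^ j) q (S L) * (1 - p * q ^ j * q ^ S L) <=
            (1 - q ^ j) * qpoch (p * q ^ j) q (S L) * (1 - p * q ^ j * q ^ S L)).
    { apply Rmult_le_compat_r; lra. }
    nra.
Qed.

Lemma D_rec (p q : R) (k L : nat) :
  q * Df p q k (S (S L)) =
  dd p q (S k) * Df p q (S k) (S L)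
  - (1 - q ^ S k) * (1 - p * q ^ S k) * Df p q (S (S k)) L.
Proof.
  unfold Df, dd. rewrite !qpoch_front.
  replace (p * q ^ k * q * q) with (p * q ^ S (S k)) by (simpl; ring).
  replace (q ^ k * q * q) with (q ^ S (S k)) by (simpl; ring).
  replace (p * q ^ S k * q) with (p * q ^ S (S k)) by (simpl; ring).
  replace (q ^ S k * q) with (q ^ S (S k)) by (simpl; ring).
  replace (p * q ^ k * q) with (p * q ^ S k) by (simpl; ring).
  replace (q ^ k * q) with (q ^ S k) by (simpl; ring).
  simpl. ring.
Qed.

Lemma dd_pos (p q : R) (n : nat) : 0 < q < 1 -> 0 <= p < 1 -> 0 < dd p q (S n).
Proof.
  intros Hq Hp. unfold dd. simpl. pose proof (qj_bounds q n Hq).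
  assert (q * q ^ n <= q) by nra.
  assert ((1 + p) * (q * q ^ n) <= (1 + p) * q) by (apply Rmult_le_compat_l; lra).
  nra.
Qed.

Lemma approx_formula (p q : R) (N k : nat) : 0 < q < 1 -> 0 <= p < 1 ->
  cf_approx (fun n => qbeta p q (k + S n)) N =
  q * Df p q k (S (S N)) / (dd p q (S k) * Df p q (S k) (S N)).
Proof.
  intros Hq Hp. revert k. induction N as [|N IH]; intro k.
  - simpl cf_approx. pose proof (dd_pos p q k Hq Hp). pose proof (qj_bounds q k Hq).
    unfold Df, dd in *. simpl. simpl in H.
    replace (1 * (1 - p * (q * q ^ k) * 1) - 1 * (1 - q * q ^ k * 1)) with ((1-p)*q*q^k) by ring.
    assert (0 < (1-p)*q*q^k) by (apply Rmult_lt_0_compat; [apply Rmult_lt_0_compat|]; lra).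
    field. split; lra.
  - rewrite cf_approx_S.
    rewrite (cf_approx_ext _ (fun n => qbeta p q (S k + S n))) by (intro; f_equal; lia).
    rewrite IH. rewrite (D_rec p q k (S N)). rewrite Nat.add_1_r. unfold qbeta.
    pose proof (dd_pos p q k Hq Hp). pose proof (dd_pos p q (S k) Hq Hp).
    pose proof (D_pos p q (S k) (S N) Hq Hp). pose proof (D_pos p q (S (S k)) N Hq Hp).
    unfold dd in *. field. repeat split; lra.
Qed.

Lemma lim_unique (u : nat -> R) (l1 l2 : R) :
  is_lim_seq u l1 -> is_lim_seq u l2 -> l1 = l2.
Proof.
  intros H1 H2. apply is_lim_seq_unique in H1. apply is_lim_seq_unique in H2.
  rewrite H1 in H2. injection H2; auto.
Qed.

Lemma D_lim (p q : R) (j c : nat) : 0 < q < 1 -> 0 <= p < 1 ->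
  is_lim_seq (fun n => Df p q j (n + c)) (qDelta p q j).
Proof.
  intros Hq Hp. pose proof (qj_bounds q j Hq).
  unfold Df, qDelta.
  apply (is_lim_seq_minus' (fun n => qpoch (p * q ^ j) q (n + c))
                           (fun n => qpoch (q ^ j) q (n + c))).
  - apply (is_lim_seq_incr_n (fun n => qpoch (p * q ^ j) q n)).
    apply qpoch_lim; split; nra.
  - apply (is_lim_seq_incr_n (fun n => qpoch (q ^ j) q n)).
    apply qpoch_lim; split; lra.
Qed.

Lemma Delta_pos (p q : R) (j : nat) : 0 < q < 1 -> 0 <= p < 1 -> 0 < qDelta p q j.
Proof.
  intros Hq Hp. pose proof (qj_bounds q j Hq).
  assert (Hb : forall n, (1 - p) * q ^ j * qpoch (p * q ^ j) q (n + 1)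
                         <= (1 - p * q ^ j) * Df p q j (n + 1)).
  { intro n. rewrite Nat.add_1_r. pose proof (D_lower p q j n Hq Hp). unfold Df. nra. }
  assert (H1 : is_lim_seq (fun n => (1 - p) * q ^ j * qpoch (p * q ^ j) q (n + 1))
                 ((1 - p) * q ^ j * qpoch_inf (p * q ^ j) q)).
  { apply (is_lim_seq_mult' (fun _ => (1 - p) * q ^ j)). apply is_lim_seq_const.
    apply (is_lim_seq_incr_n (fun n => qpoch (p * q ^ j) q n)).
    apply qpoch_lim; split; nra. }
  assert (H2 : is_lim_seq (fun n => (1 - p * q ^ j) * Df p q j (n + 1))
                 ((1 - p * q ^ j) * qDelta p q j)).
  { apply (is_lim_seq_mult' (fun _ => (1 - p * q ^ j))). apply is_lim_seq_const.
    apply D_lim; auto. }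
  pose proof (is_lim_seq_le _ _ _ _ Hb H1 H2) as Hle. simpl in Hle.
  assert (0 < qpoch_inf (p * q ^ j) q) by (apply qpoch_inf_pos; [split; nra|lra]).
  assert (0 < (1 - p) * q ^ j * qpoch_inf (p * q ^ j) q).
  { apply Rmult_lt_0_compat; auto. apply Rmult_lt_0_compat; lra. }
  assert (0 < 1 - p * q ^ j) by nra.
  nra.
Qed.

Theorem theorem7 (p q : R) (hq0 : 0 < q) (hq1 : q < 1) (hp0 : 0 <= p) (hp1 : p < 1) :
  is_lim_seq (fun N => cf_approx (fun n => qbeta p q (S n)) N)
    (Finite ((q / (1 - p * q) * (qDelta p q 0 / qDelta p q 1))%R)) /\
  q / (1 - p * q) * (qDelta p q 0 / qDelta p q 1) =
    q * (1 - p) * qpoch_inf (p * q ^ 2) q / (qpoch_inf (p * q) q - qpoch_inf q q) /\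
  (forall k : nat,
    is_lim_seq (fun N => cf_approx (fun n => qbeta p q (k + S n)) N)
      (Finite ((q / (1 + q - (1 + p) * q ^ (S k)) * (qDelta p q k / qDelta p q (S k))))%R)).
Proof.
  assert (Hq : 0 < q < 1) by lra. assert (Hp : 0 <= p < 1) by lra.
  assert (H3 : forall k : nat,
    is_lim_seq (fun N => cf_approx (fun n => qbeta p q (k + S n)) N)
      (Finite ((q / (1 + q - (1 + p) * q ^ (S k)) * (qDelta p q k / qDelta p q (S k))))%R)).
  { intro k.
    pose proof (dd_pos p q k Hq Hp). pose proof (Delta_pos p q (S k) Hq Hp).
    apply (is_lim_seq_ext (fun N => q * Df p q k (N + 2) / (dd p q (S k) * Df p q (S k) (N + 1)))).
    { intro N. rewrite approx_formula by auto. do 2 f_equal; f_equal; [|f_equal]; lia. }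
    replace (q / (1 + q - (1 + p) * q ^ S k) * (qDelta p q k / qDelta p q (S k)))
      with (q * qDelta p q k / (dd p q (S k) * qDelta p q (S k)))
      by (unfold dd in *; field; split; lra).
    apply is_lim_seq_div'.
    - apply (is_lim_seq_mult' (fun _ => q)). apply is_lim_seq_const. apply D_lim; auto.
    - apply (is_lim_seq_mult' (fun _ => dd p q (S k))). apply is_lim_seq_const. apply D_lim; auto.
    - apply Rgt_not_eq. apply Rmult_lt_0_compat; lra. }
  split; [|split; [|exact H3]].
  - replace (1 - p * q) with (1 + q - (1 + p) * q ^ S 0) by (simpl; ring).
    exact (H3 0%nat).
  -
    assert (E1 : qpoch_inf (q ^ 0) q = 0).
    { apply (lim_unique (fun n => qpoch (q ^ 0) q n)).
      - apply qpoch_lim; simpl; lra.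
      - apply (is_lim_seq_incr_n _ 1).
        apply (is_lim_seq_ext (fun _ => 0)); [|apply is_lim_seq_const].
        intro n. rewrite Nat.add_1_r, qpoch_front. simpl. ring. }
    assert (E0 : qpoch_inf (p * q ^ 0) q = (1 - p) * (1 - p * q) * qpoch_inf (p * q ^ 2) q).
    { apply (lim_unique (fun n => qpoch (p * q ^ 0) q n)).
      - apply qpoch_lim; simpl; lra.
      - apply (is_lim_seq_incr_n _ 2).
        apply (is_lim_seq_ext (fun n => (1 - p) * (1 - p * q) * qpoch (p * q ^ 2) q n)).
        + intro n. replace (n + 2)%nat with (S (S n)) by lia. rewrite !qpoch_front.
          replace (p * q ^ 0 * q * q) with (p * q ^ 2) by (simpl; ring).
          replace (p * q ^ 0 * q) with (p * q) by (simpl; ring).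
          simpl. ring.
        + apply (is_lim_seq_mult' (fun _ => (1 - p) * (1 - p * q))). apply is_lim_seq_const.
          pose proof (qj_bounds q 2 Hq). apply qpoch_lim; [split|]; nra. }
    unfold qDelta at 1 2. rewrite E1, E0.
    replace (p * q ^ 1) with (p * q) by ring. replace (q ^ 1) with q by ring.
    unfold Rdiv. set (i := / (qpoch_inf (p * q) q - qpoch_inf q q)).
    field. nra.
Qed.
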